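(* Let $X$ be a random variable geometrically distributed with parameter $f \in (0,1]$, i.e. $\Pr[X = k] = (1-f)^{k-1} f$ for $k \in \{1,2,\dots\}$. Then with $d_2 = e^{\gamma}$, where $\gamma$ is the Euler–Mascheroni constant, $$\log(\mathbb{E}[X]) \le \mathbb{E}[\log(d_2 X)]$$ for all $f \in (0,1]$. *)

(* Defs.v *)
From Stdlib Require Import Reals.
From Coquelicot Require Import Coquelicot.
Open Scope R_scope.

Fixpoint harmonic (n : nat) : R :=
  match n with
  | O => 0
  | S m => harmonic m + / INR (S m)
  end.

Definition euler_gamma : R :=
  real (Lim_seq (fun n => harmonic n - ln (INR n))).

Definition geom_pmf (f : R) (k : nat) : R := (1 - f) ^ (k - 1) * f.

Definition geom_expect (f : R) (g : R -> R) : R :=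
  Series (fun n => geom_pmf f (S n) * g (INR (S n))).

Definition d2_const : R := exp euler_gamma.

(* Main.v *)
Require Import Defs.
From Stdlib Require Import Reals Lra Lia.
From Coquelicot Require Import Coquelicot.
Open Scope R_scope.

Lemma ln_le_sub1 y : 0 < y -> ln y <= y - 1.
Proof. intros H. pose proof (exp_ineq1_le (ln y)). rewrite exp_ln in H0; lra. Qed.

Lemma ln_diff_le a b : 0 < a -> 0 < b -> ln a - ln b <= (a - b) / b.
Proof.
  intros Ha Hb. rewrite <- ln_div by lra.
  pose proof (ln_le_sub1 (a/b)). assert (0 < a / b) by (apply Rdiv_lt_0_compat; lra).
  specialize (H H0). replace ((a-b)/b) with (a/b - 1) by (field; lra). lra.
Qed.

Lemma ln_diff_ge a b : 0 < a -> 0 < b -> (a - b) / a <= ln a - ln b.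
Proof.
  intros Ha Hb. pose proof (ln_diff_le b a Hb Ha).
  replace ((a-b)/a) with (-((b-a)/a)) by (field; lra). lra.
Qed.

Lemma INR_S_pos n : 0 < INR (S n).
Proof. apply lt_0_INR; lia. Qed.

Definition wseq (m : nat) := harmonic (S m) - ln (INR (S (S m))).

Lemma wseq_incr m : wseq m <= wseq (S m).
Proof.
  unfold wseq. change (harmonic (S (S m))) with (harmonic (S m) + / INR (S (S m))).
  pose proof (ln_diff_le (INR (S (S (S m)))) (INR (S (S m))) (INR_S_pos _) (INR_S_pos _)).
  replace (INR (S (S (S m))) - INR (S (S m))) with 1 in H
    by (rewrite (S_INR (S (S m))); ring).
  unfold Rdiv in H. lra.
Qed.

Lemma wseq_mono n k : wseq n <= wseq (n + k).
Proof.
  induction k. rewrite Nat.add_0_r; lra.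
  rewrite Nat.add_succ_r. pose proof (wseq_incr (n + k)). lra.
Qed.

Definition useq (m : nat) := harmonic m - ln (INR m).

Lemma useq_le1 m : useq (S m) <= 1.
Proof.
  induction m.
  - unfold useq. simpl. rewrite ln_1. lra.
  - unfold useq in *. change (harmonic (S (S m))) with (harmonic (S m) + / INR (S (S m))).
    pose proof (ln_diff_ge (INR (S (S m))) (INR (S m)) (INR_S_pos _) (INR_S_pos _)).
    replace (INR (S (S m)) - INR (S m)) with 1 in H by (rewrite (S_INR (S m)); ring).
    unfold Rdiv in H. lra.
Qed.

Lemma gamma_ge n : wseq n <= euler_gamma.
Proof.
  assert (Hlo : Rbar_le (wseq n) (Lim_seq useq)).
  { rewrite <- (Lim_seq_const (wseq n)). apply Lim_seq_le_loc.
    exists (S n). intros m Hm. destruct m as [|m]; [lia|].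
    replace m with (n + (m - n))%nat by lia.
    pose proof (wseq_mono n (m - n)). unfold useq, wseq in *.
    pose proof (ln_le (INR (S (n + (m-n)))) (INR (S (S (n + (m-n))))) (INR_S_pos _)
      ltac:(rewrite (S_INR (S _)); lra)). lra. }
  assert (Hhi : Rbar_le (Lim_seq useq) 1).
  { rewrite <- (Lim_seq_const 1). apply Lim_seq_le_loc.
    exists 1%nat. intros m Hm. destruct m as [|m]; [lia|]. apply useq_le1. }
  unfold euler_gamma. fold useq.
  destruct (Lim_seq useq); simpl in *; try contradiction; lra.
Qed.

Definition FN (N : nat) (t : R) := sum_f_R0 (fun j => t ^ (S j) / INR (S j)) N.

Lemma dFN N t : is_derive (FN N) t (sum_f_R0 (fun j => t ^ j) N).
Proof.
  induction N.
  - unfold FN; simpl. auto_derive; auto. simpl. field.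
  - change (is_derive (fun t => FN N t + t ^ (S (S N)) / INR (S (S N))) t
      (sum_f_R0 (fun j => t ^ j) N + t ^ (S N))).
    assert (D2 : is_derive (fun t => t ^ (S (S N)) / INR (S (S N))) t (t ^ (S N))).
    { auto_derive; auto.
      assert (INR (S (S N)) <> 0) by (apply not_0_INR; lia).
      change (match N with 0%nat => 1 | S _ => INR N + 1 end) with (INR (S N)).
      rewrite S_INR in H. simpl. field. auto. }
    exact (is_derive_plus _ _ _ _ _ IHN D2).
Qed.

Lemma FN0 N : FN N 0 = 0.
Proof.
  unfold FN. rewrite (sum_eq _ (fun _ => 0)). rewrite sum_cte; ring.
  intros i _. simpl. unfold Rdiv. ring.
Qed.

Lemma mvt_ln N q : 0 <= q < 1 -> - ln (1 - q) <= FN N q + q ^ (S (S N)) / (1 - q).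
Proof.
  intros Hq.
  set (h := fun t => - ln (1 - t) - FN N t).
  assert (dh : forall t, t < 1 -> is_derive h t (t ^ (S N) / (1 - t))).
  { intros t Ht. unfold h.
    replace (t ^ (S N) / (1 - t)) with (- (-1 / (1 - t)) - sum_f_R0 (fun j => t ^ j) N).
    2:{ destruct (Req_dec t 1) as [E|E]; [lra|]. rewrite tech3 by auto. field. lra. }
    assert (D1 : is_derive (fun t => - ln (1 - t)) t (- (-1 / (1 - t)))).
    { auto_derive. lra. field. lra. }
    pose proof (is_derive_minus _ _ _ _ _ D1 (dFN N t)) as H2.
    eapply is_derive_ext; [| exact H2]. intros u. reflexivity. }
  assert (H := MVT_gen h 0 q (fun t => t ^ (S N) / (1 - t))).
  cbv zeta in H. rewrite Rmin_left in H by lra. rewrite Rmax_right in H by lra.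
  destruct H as [c [Hc E]].
  - intros x Hx. apply dh. lra.
  - intros x Hx. apply continuity_pt_filterlim. apply (ex_derive_continuous (K:=R_AbsRing) (V:=R_NormedModule)).
    eexists. apply dh. lra.
  - unfold h in E. rewrite FN0, Rminus_0_r in E. replace (1 - 0) with 1 in E by ring. rewrite ln_1 in E.
    assert (c ^ (S N) / (1 - c) * q <= q ^ (S N) / (1 - q) * q).
    { apply Rmult_le_compat_r. lra. unfold Rdiv. apply Rmult_le_compat.
      apply pow_le; lra. left; apply Rinv_0_lt_compat; lra.
      apply pow_incr; lra. apply Rinv_le_contravar; lra. }
    replace (q ^ (S (S N)) / (1 - q)) with (q ^ (S N) / (1 - q) * q) by (simpl; field; lra).
    lra.
Qed.

Lemma abel q N :
  sum_f_R0 (fun n => q ^ n * (1 - q) * ln (INR (S n))) N =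
  sum_f_R0 (fun j => q ^ (S j) * (ln (INR (S (S j))) - ln (INR (S j)))) N
  - q ^ (S N) * ln (INR (S (S N))).
Proof.
  induction N.
  - cbn [sum_f_R0]. replace (INR 1) with 1 by reflexivity. rewrite ln_1. ring.
  - cbn [sum_f_R0]. rewrite IHN. cbn [pow]. ring.
Qed.

Lemma gsum N :
  sum_f_R0 (fun j => / INR (S j) - (ln (INR (S (S j))) - ln (INR (S j)))) N = wseq N.
Proof.
  induction N.
  - unfold wseq. cbn [sum_f_R0 harmonic]. replace (INR 1) with 1 by reflexivity. rewrite ln_1. ring.
  - unfold wseq in *. cbn [sum_f_R0 harmonic] in *. rewrite IHN. ring.
Qed.

Theorem lemma8 (f : R) (hf : 0 < f <= 1) :
  ln (geom_expect f (fun x => x)) <= geom_expect f (fun x => ln (d2_const * x)).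
Proof.
  set (q := 1 - f).
  assert (Hq : 0 <= q < 1) by (unfold q; lra).
  assert (Hf : f = 1 - q) by (unfold q; ring).
  assert (Hgeom : is_series (fun n => q ^ n) (/ (1 - q))).
  { apply is_series_geom. rewrite Rabs_pos_eq; lra. }
  assert (Hmul : is_series (fun n => INR (S n) * q ^ n) (/ (1 - q) * / (1 - q))).
  { pose proof (is_series_mult_pos _ _ _ _ Hgeom Hgeom
      (fun n => pow_le q n (proj1 Hq)) (fun n => pow_le q n (proj1 Hq))) as H.
    eapply is_series_ext; [| exact H]. intros n. cbv beta.
    rewrite (sum_eq _ (fun _ => q ^ n)).
    - rewrite sum_cte. apply Rmult_comm.
    - intros i Hi. rewrite <- pow_add. f_equal. lia. }
  assert (E1 : geom_expect f (fun x => x) = / f).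
  { unfold geom_expect, geom_pmf. apply is_series_unique.
    pose proof (is_series_scal_r f _ _ Hmul) as H.
    replace (/ f) with (/ (1 - q) * / (1 - q) * f) by (rewrite <- Hf; field; lra).
    eapply is_series_ext; [| exact H]. intros n.
    replace (S n - 1)%nat with n by lia. fold q. match goal with |- ?a = ?b => change (@eq R a b) end. ring. }
  set (b := fun n => q ^ n * f * ln (INR (S n))).
  assert (lnpos : forall n, 0 <= ln (INR (S n))).
  { intros n. rewrite <- ln_1. apply ln_le. lra. apply (le_INR 1). lia. }
  assert (lnle : forall n, ln (INR (S n)) <= INR (S n)).
  { intros n. pose proof (ln_le_sub1 _ (INR_S_pos n)). lra. }
  assert (bpos : forall n, 0 <= b n).
  { intros n. unfold b. apply Rmult_le_pos; [apply Rmult_le_pos|]; auto. apply pow_le; lra. lra. }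
  assert (Hexb : ex_series b).
  { apply (ex_series_le (K:=R_AbsRing) (V:=R_CompleteNormedModule)) with (b := fun n => INR (S n) * q ^ n * f).
    2: { eexists. exact (is_series_scal_r f _ _ Hmul). }
    intros n. change (Rabs (b n) <= INR (S n) * q ^ n * f).
    rewrite Rabs_pos_eq by auto. unfold b.
    assert (0 <= q ^ n * f) by (apply Rmult_le_pos; [apply pow_le|]; lra).
    specialize (lnle n). replace (INR (S n) * q ^ n * f) with (q ^ n * f * INR (S n)) by ring.
    apply Rmult_le_compat_l; auto. }
  set (L := Series b).
  assert (HL : is_series b L) by (apply Series_correct; auto).
  assert (E2 : geom_expect f (fun x => ln (d2_const * x)) = euler_gamma + L).
  { unfold geom_expect, geom_pmf. apply is_series_unique.
    pose proof (is_series_scal_r euler_gamma _ _ (is_series_scal_r f _ _ Hgeom)) as Ha.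
    pose proof (is_series_plus _ _ _ _ Ha HL) as Hs.
    assert (Hs' : is_series (fun n => q ^ n * f * euler_gamma + b n) (/ (1 - q) * f * euler_gamma + L))
      by exact Hs.
    replace (euler_gamma + L) with (/ (1 - q) * f * euler_gamma + L) by (rewrite <- Hf; field; lra).
    eapply is_series_ext; [| exact Hs']. intros n. unfold b, d2_const.
    rewrite ln_mult by (apply exp_pos || apply INR_S_pos). rewrite ln_exp.
    replace (S n - 1)%nat with n by lia. fold q.
    match goal with |- ?a = ?b => change (@eq R a b) end. ring. }
  assert (Hpart : forall N, sum_f_R0 b N <= L).
  { intros N. unfold L. rewrite (Series_incr_n b (S N)) by (lia || auto).
    simpl pred.
    assert (Hext : ex_series (fun k => b (S N + k)%nat)) by (apply ex_series_incr_n; auto).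
    pose proof (Series_le (fun k => 0 * b (S N + k)%nat) (fun k => b (S N + k)%nat)) as H.
    rewrite Series_scal_l in H. assert (0 <= Series (fun k => b (S N + k)%nat)).
    { replace 0 with (0 * Series (fun k : nat => b (S N + k)%nat)) by ring. apply H; auto.
      intros k. rewrite Rmult_0_l. split; [lra | auto]. }
    lra. }
  set (e := fun N => INR (S (S N)) * q ^ (S N) + q ^ (S (S N)) / (1 - q)).
  assert (He : is_lim_seq e 0).
  { assert (T1 : is_lim_seq (fun n => INR (S n) * q ^ n) 0).
    { apply ex_series_lim_0. eexists. exact Hmul. }
    apply is_lim_seq_incr_1 in T1.
    assert (T2 : is_lim_seq (fun n => q ^ n) 0) by (apply is_lim_seq_geom; rewrite Rabs_pos_eq; lra).
    apply (is_lim_seq_incr_n _ 2) in T2.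
    apply (is_lim_seq_scal_r _ (/ (1 - q))) in T2.
    simpl in T2. rewrite Rmult_0_l in T2.
    pose proof (is_lim_seq_plus' _ _ _ _ T1 T2) as T.
    rewrite Rplus_0_l in T.
    eapply is_lim_seq_ext; [| exact T]. intros n. unfold e.
    replace (n + 2)%nat with (S (S n)) by lia. reflexivity. }
  set (c := - ln f - euler_gamma - L).
  assert (Hc : forall N, c <= e N).
  { intros N. unfold c, e.
    pose proof (mvt_ln N q Hq) as M. rewrite <- Hf in M.
    assert (Fsplit : FN N q =
      sum_f_R0 (fun j => q ^ (S j) * (ln (INR (S (S j))) - ln (INR (S j)))) N +
      sum_f_R0 (fun j => q ^ (S j) * (/ INR (S j) - (ln (INR (S (S j))) - ln (INR (S j))))) N).
    { rewrite <- sum_plus. unfold FN. apply sum_eq. intros i _. unfold Rdiv. ring. }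
    pose proof (abel q N) as Ab. rewrite <- Hf in Ab. fold b in Ab.
    assert (B2 : sum_f_R0 (fun j => q ^ (S j) * (/ INR (S j) - (ln (INR (S (S j))) - ln (INR (S j))))) N
                 <= euler_gamma).
    { rewrite <- (gamma_ge N), <- gsum. apply sum_Rle. intros j _.
      pose proof (ln_diff_le (INR (S (S j))) (INR (S j)) (INR_S_pos _) (INR_S_pos _)) as Hd.
      replace (INR (S (S j)) - INR (S j)) with 1 in Hd by (rewrite (S_INR (S j)); ring).
      unfold Rdiv in Hd. rewrite Rmult_1_l in Hd.
      assert (q ^ S j <= 1) by (rewrite <- (pow1 (S j)); apply pow_incr; lra).
      assert (0 <= q ^ S j) by (apply pow_le; lra).
      nra. }
    assert (B3 : q ^ (S N) * ln (INR (S (S N))) <= INR (S (S N)) * q ^ (S N)).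
    { rewrite Rmult_comm. apply Rmult_le_compat_r. apply pow_le; lra. auto. }
    pose proof (Hpart N).
    assert (Hlnf : - ln f = - ln (1 - q)) by (rewrite <- Hf; reflexivity).
    rewrite <- Hf. rewrite Fsplit in M. lra. }
  pose proof (is_lim_seq_le (fun _ => c) e c 0 Hc (is_lim_seq_const c) He) as Hle.
  simpl in Hle.
  rewrite E1, E2, ln_Rinv by lra. unfold c in Hle. lra.
Qed.
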